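(* Let $\lambda$ be a partition of $n$, let $\mathrm{Tab}(\lambda)$ be the set of standard tableaux of shape $\lambda$, and let $\aleph_\lambda$ be the bottom tableau of shape $\lambda$. Suppose $f(x_1,\dots,x_n)=\sum_{t\in \mathrm{Tab}(\lambda)} c_t\,\Delta^x_t$ with coefficients $c_t$ in a field of characteristic $0$ not depending on $x_1,\dots,x_n$. Then $\Delta^x_{\aleph_\lambda}(\aleph_\lambda)\neq 0$ and $$c_{\aleph_\lambda}=\frac{f(\aleph_\lambda)}{\Delta^x_{\aleph_\lambda}(\aleph_\lambda)}.$$
   Context: Diagrams are drawn in French convention: rows are numbered $0,1,2,\dots$ from the bottom, columns $0,1,\dots$ from the left. A standard tableau of shape $\lambda$ is a bijective filling of the boxes of the diagram of $\lambda$ with $1,\dots,n$, increasing from left to right in rows and from bottom to top in columns. For distinct indices, $\Delta^x(i_1,\dots,i_k)=\prod_{1\le p<q\le k}(x_{i_p}-x_{i_q})$. The Specht polynomial of a tableau $t$ is $\Delta^x_t=\prod_{\text{columns } C \text{ of } t}\Delta^x(\text{entries of } C \text{ read from bottom to top})$. The bottom tableau $\aleph_\lambda$ is the standard tableau whose rows, from the bottom row upwards, are filled with consecutive integers (each row from left to right). For a tableau $t$ and a function $f(x_1,\dots,x_n)$, $f(t)$ denotes the specialization $x_i\mapsto r$, where $r$ is the row index of the box of $t$ containing $i$. *)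

(* Defs.v *)
From HB Require Import structures.
From mathcomp Require Import all_boot all_order all_algebra.
From mathcomp Require Import mpoly.
Set Implicit Arguments. Unset Strict Implicit. Unset Printing Implicit Defensive.
Import GRing.Theory.
Local Open Scope ring_scope.

(* Conventions (French): a box is a pair (row, column), rows numbered from 0
   at the bottom, columns from 0 at the left.  The entries 1..n of a tableau
   are represented by i : 'I_n (i stands for the entry i+1, variable x_{i+1}
   is 'X_i).  A tableau filling with 1..n is encoded by its "position map"
   t : {ffun 'I_n -> 'I_n * 'I_n}, t i = box containing entry i. *)

Definition tabT (n : nat) := {ffun 'I_n -> 'I_n * 'I_n}.

Definition is_partition (n : nat) (la : seq nat) : bool :=
  [&& sorted geq la, all (fun p => 0 < p)%N la & sumn la == n].

Definition in_diagram (la : seq nat) (b : nat * nat) : bool :=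
  (b.2 < nth 0 la b.1)%N.

Definition trow n (t : tabT n) (i : 'I_n) : nat := (t i).1.
Definition tcol n (t : tabT n) (i : 'I_n) : nat := (t i).2.

Definition std_tab (la : seq nat) n (t : tabT n) : bool :=
  [&& injectiveb t,
      [forall i, in_diagram la (trow t i, tcol t i)],
      [forall r : 'I_n, forall c : 'I_n,
         in_diagram la (val r, val c) ==> [exists i, t i == (r, c)]],
      [forall i, forall j,
         ((trow t i == trow t j) && (tcol t i < tcol t j)%N) ==> (i < j)%N] &
      [forall i, forall j,
         ((tcol t i == tcol t j) && (trow t i < trow t j)%N) ==> (i < j)%N]].

(* Specht polynomial: product over columns C of Delta(entries of C read from
   bottom to top) = prod over pairs p<q (in that reading order) of x_p - x_q *)
Definition specht (F : fieldType) n (t : tabT n) : {mpoly F[n]} :=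
  \prod_(c < n) \prod_(i : 'I_n | tcol t i == c)
     \prod_(j : 'I_n | (tcol t j == c) && (trow t i < trow t j)%N) ('X_i - 'X_j).

(* bottom tableau: rows from the bottom filled with consecutive integers *)
Definition aleph_row (la : seq nat) (k : nat) : nat :=
  find (fun r => k < sumn (take r.+1 la))%N (iota 0 (size la)).
Definition aleph_col (la : seq nat) (k : nat) : nat :=
  (k - sumn (take (aleph_row la k) la))%N.
Definition aleph (la : seq nat) n : tabT n :=
  [ffun i : 'I_n => (insubd i (aleph_row la i), insubd i (aleph_col la i))].

Definition spec_at (F : fieldType) n (t : tabT n) (f : {mpoly F[n]}) : F :=
  f.@[fun i => (trow t i)%:R].

(* Main.v *)
Require Import Defs.
From HB Require Import structures.
From mathcomp Require Import all_boot all_order all_algebra.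
From mathcomp Require Import mpoly.
From mathcomp Require Import zify.
Set Implicit Arguments. Unset Strict Implicit.
Import GRing.Theory.
Local Open Scope ring_scope.

Local Notation S la r := (sumn (take r la)).

Lemma S_le (la : seq nat) r1 r2 : (r1 <= r2)%N -> (S la r1 <= S la r2)%N.
Proof.
move=> h; rewrite -(subnKC h) takeD sumn_cat; exact: leq_addr.
Qed.

Lemma S_succ (la : seq nat) r : (r < size la)%N -> S la r.+1 = (S la r + nth 0 la r)%N.
Proof. by move=> h; rewrite (take_nth 0 h) sumn_rcons. Qed.

Lemma size_le_sumn (s : seq nat) : all (fun p => 0 < p)%N s -> (size s <= sumn s)%N.
Proof. elim: s => //= a s IH /andP[a0 /IH h]; rewrite -add1n; exact: leq_add. Qed.

Lemma nth_decr (la : seq nat) r1 r2 : sorted geq la -> (r1 <= r2)%N ->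
  (nth 0 la r2 <= nth 0 la r1)%N.
Proof.
move=> so h; case: (ltnP r2 (size la)) => h2; last by rewrite nth_default.
have h1 : (r1 < size la)%N by exact: leq_ltn_trans h h2.
have tr : transitive geq by move=> a b c' /= ? ?; lia.
exact: (@sorted_leq_nth _ geq tr (fun a => leqnn a) 0 la so r1 r2 h1 h2 h).
Qed.

Lemma row_uniq (la : seq nat) r k : (r < size la)%N ->
  (S la r <= k)%N -> (k < S la r.+1)%N -> aleph_row la k = r.
Proof.
move=> hr h1 h2; rewrite /aleph_row.
set p := (fun r0 : nat => (k < S la r0.+1)%N).
have hp : has p (iota 0 (size la)).
  by apply/hasP; exists r; [rewrite mem_iota | ].
have hf := hp; rewrite has_find size_iota in hf.
have hpf : (k < S la (find p (iota 0 (size la))).+1)%N.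
  by have := nth_find 0 hp; rewrite nth_iota // add0n.
set q := find p (iota 0 (size la)) in hf hpf *.
case: (ltngtP q r) => // hc; exfalso.
- have : (S la q.+1 <= S la r)%N by apply: S_le.
  lia.
- have := before_find 0 hc; rewrite nth_iota ?add0n // /p => /negbT; rewrite -leqNgt.
  lia.
Qed.

Lemma row_ex (n : nat) (la : seq nat) k : is_partition n la -> (k < n)%N ->
  [/\ (aleph_row la k < size la)%N, (S la (aleph_row la k) <= k)%N
    & (k < S la (aleph_row la k).+1)%N].
Proof.
case/and3P=> so pos /eqP sn kn.
have sz : (0 < size la)%N by move: kn; case: la sn {so pos} => //= <-.
rewrite /aleph_row; set p := (fun r0 : nat => (k < S la r0.+1)%N).
have hp : has p (iota 0 (size la)).
  apply/hasP; exists (size la).-1; first by rewrite mem_iota /= add0n prednK.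
  by rewrite /p prednK // take_size sn.
have hf := hp; rewrite has_find size_iota in hf.
have hpf : (k < S la (find p (iota 0 (size la))).+1)%N.
  by have := nth_find 0 hp; rewrite nth_iota // add0n.
set q := find p (iota 0 (size la)) in hf hpf *.
split => //.
case: (posnP q) => [->|qpos]; first by rewrite take0.
have hqi : (q.-1 < find p (iota 0 (size la)))%N by rewrite -/q; lia.
have := before_find 0 hqi; rewrite nth_iota ?add0n; last by lia.
rewrite /p prednK // => /negbT; by rewrite -leqNgt.
Qed.

Lemma size_le_n n la : is_partition n la -> (size la <= n)%N.
Proof. by case/and3P=> _ pos /eqP <-; exact: size_le_sumn. Qed.

Lemma S_le_n n la r : is_partition n la -> (S la r <= n)%N.
Proof.
case/and3P=> _ _ /eqP <-; rewrite -{2}(cat_take_drop r la) sumn_cat; exact: leq_addr.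
Qed.

Lemma diag_lt n la r g : is_partition n la -> (g < nth 0 la r)%N ->
  [/\ (r < size la)%N, (S la r + g < n)%N & (r < n)%N /\ (g < n)%N].
Proof.
move=> hp hg.
have hr : (r < size la)%N by case: ltnP => // h; move: hg; rewrite nth_default.
have h1 : (S la r + g < n)%N.
  apply: (@leq_trans (S la r.+1)); last exact: S_le_n hp.
  by rewrite S_succ // ltn_add2l.
split=> //; split; last by lia.
have := size_le_n hp; lia.
Qed.

Lemma aleph_rowE n la (i : 'I_n) : is_partition n la ->
  trow (aleph la n) i = aleph_row la i.
Proof.
move=> hp; rewrite /trow /aleph ffunE /= insubdK //.
have [h _ _] := row_ex hp (ltn_ord i).
exact: leq_trans h (size_le_n hp).
Qed.

Lemma aleph_colE n la (i : 'I_n) : is_partition n la ->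
  tcol (aleph la n) i = aleph_col la i.
Proof.
move=> hp; rewrite /tcol /aleph ffunE /= insubdK //.
rewrite /aleph_col; exact: leq_ltn_trans (leq_subr _ _) (ltn_ord i).
Qed.

Lemma aleph_diag n la k : is_partition n la -> (k < n)%N ->
  (aleph_col la k < nth 0 la (aleph_row la k))%N.
Proof.
move=> hp kn; have [h1 h2 h3] := row_ex hp kn.
rewrite S_succ // in h3; rewrite /aleph_col; lia.
Qed.

Lemma pos_aleph n la k : is_partition n la -> (k < n)%N ->
  (S la (aleph_row la k) + aleph_col la k)%N = k.
Proof. move=> hp kn; have [h1 h2 h3] := row_ex hp kn; rewrite /aleph_col; lia. Qed.

Lemma aleph_pos n la r g : is_partition n la -> (g < nth 0 la r)%N ->
  aleph_row la (S la r + g) = r /\ aleph_col la (S la r + g) = g.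
Proof.
move=> hp hg; have [hr _ _] := diag_lt hp hg.
have e : aleph_row la (S la r + g) = r.
  apply: row_uniq => //; first exact: leq_addr.
  by rewrite S_succ // ltn_add2l.
by split=> //; rewrite /aleph_col e addKn.
Qed.

Lemma lex_lt la r g r' g' : (g < nth 0 la r)%N -> (r < r')%N ->
  (S la r + g < S la r' + g')%N.
Proof.
move=> hg hr.
have hs : (r < size la)%N by case: ltnP => // h; move: hg; rewrite nth_default.
have := S_le la hr; rewrite S_succ //; lia.
Qed.

Lemma tab_inj n (t : tabT n) : injective t -> forall i j,
  trow t i = trow t j -> tcol t i = tcol t j -> i = j.
Proof.
move=> tinj i j h1 h2; apply: tinj.
rewrite [t i]surjective_pairing [t j]surjective_pairing; congr pair; exact: val_inj.
Qed.

Lemma tab_eq n la (t : tabT n) : is_partition n la -> std_tab la t ->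
  (forall i j : 'I_n, i != j -> tcol t i = tcol t j ->
     aleph_row la i != aleph_row la j) ->
  forall i : 'I_n, trow t i = aleph_row la i /\ tcol t i = aleph_col la i.
Proof.
move=> hp /and5P[/injectiveP tinj /forallP tdiag tsurj trowinc tcolinc] H.
have surj : forall rr cc, (cc < nth 0 la rr)%N ->
    exists j : 'I_n, trow t j = rr /\ tcol t j = cc.
  move=> rr cc hd; have [_ _ [hr hc]] := diag_lt hp hd.
  move/forallP: tsurj => /(_ (Ordinal hr)) /forallP /(_ (Ordinal hc)) /implyP.
  case/(_ hd)/existsP => j /eqP tj; exists j; by rewrite /trow /tcol tj.
have rinc : forall i j : 'I_n, trow t i = trow t j -> (tcol t i < tcol t j)%N -> (i < j)%N.
  move=> i j h1 h2; move/forallP: trowinc => /(_ i) /forallP /(_ j) /implyP; apply.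
  by rewrite h1 eqxx.
have cinc : forall i j : 'I_n, tcol t i = tcol t j -> (trow t i < trow t j)%N -> (i < j)%N.
  move=> i j h1 h2; move/forallP: tcolinc => /(_ i) /forallP /(_ j) /implyP; apply.
  by rewrite h1 eqxx.
have alex : forall (i : 'I_n) rr cc, (cc < nth 0 la rr)%N ->
    (S la rr + cc < S la (aleph_row la i) + aleph_col la i)%N ->
    exists j : 'I_n, [/\ aleph_row la j = rr, aleph_col la j = cc & (j < i)%N].
  move=> i rr cc hd hl; have [_ hn _] := diag_lt hp hd.
  exists (Ordinal hn); have [e1 e2] := aleph_pos hp hd; split => //=.
  by rewrite -[X in (_ < X)%N](pos_aleph hp (ltn_ord i)).
have diagcol : forall rr rr' cc, (rr <= rr')%N -> (cc < nth 0 la rr')%N -> (cc < nth 0 la rr)%N.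
  move=> rr rr' cc h1 h2; case/and3P: hp => so _ _.
  exact: leq_trans h2 (nth_decr so h1).
move=> i; elim/ltn_ind: {i}(val i) {-2}i (erefl (val i)) => m IH i hi.
have IH' : forall j : 'I_n, (j < i)%N -> trow t j = aleph_row la j /\ tcol t j = aleph_col la j.
  by move=> j hj; apply: (IH j) => //; rewrite -hi.
have td : (tcol t i < nth 0 la (trow t i))%N by exact: tdiag.
have ad := aleph_diag hp (ltn_ord i).
have posi := pos_aleph hp (ltn_ord i).
case: (ltngtP (aleph_row la i) (trow t i)) => hr.
-
  exfalso.
  have [j [tj1 tj2]] := surj (aleph_row la i) (tcol t i) (diagcol _ _ _ (ltnW hr) td).
  have ji : (j < i)%N by apply: cinc => //; rewrite tj1.
  have [e1 e2] := IH' j ji.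
  have : j != i by rewrite neq_ltn ji.
  move/H => /(_ tj2); by rewrite -e1 tj1 eqxx.
- exfalso.
  have hl := lex_lt (aleph_col la i) td hr.
  have [j [e1 e2 ji]] := alex i _ _ td hl.
  have [f1 f2] := IH' j ji.
  have eij : j = i by apply: (tab_inj tinj); [rewrite f1 e1 | rewrite f2 e2].
  by move: ji; rewrite eij ltnn.
- split => //.
  case: (ltngtP (tcol t i) (aleph_col la i)) => hc //; exfalso.
  + have hl : (S la (trow t i) + tcol t i < S la (aleph_row la i) + aleph_col la i)%N.
      by rewrite hr ltn_add2l.
    have [j [e1 e2 ji]] := alex i _ _ td hl.
    have [f1 f2] := IH' j ji.
    have eij : j = i by apply: (tab_inj tinj); [rewrite f1 e1 | rewrite f2 e2].
    by move: ji; rewrite eij ltnn.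
  + have [j [tj1 tj2]] := surj (aleph_row la i) (aleph_col la i) ad.
    have ji : (j < i)%N by apply: rinc; rewrite ?tj1 ?tj2.
    have [e1 e2] := IH' j ji.
    have := pos_aleph hp (ltn_ord j); rewrite -e1 -e2 tj1 tj2 posi => eij.
    by move: ji; rewrite eij ltnn.
Qed.

Lemma specht_zero (F : fieldType) n (t : tabT n) (v : 'I_n -> F) i j :
  injective t -> i != j -> tcol t i = tcol t j -> v i = v j ->
  (specht F t).@[v] = 0.
Proof.
move=> tinj nij hc hv.
have hr : trow t i != trow t j.
  by apply: contra nij => /eqP h; apply/eqP; apply: (tab_inj tinj).
wlog lt : i j nij hc hv hr / (trow t i < trow t j)%N.
  move=> W; case: (ltngtP (trow t i) (trow t j)) => h.
  - exact: W h.
  - by apply: (W j i) => //; rewrite eq_sym.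
  - by rewrite h eqxx in hr.
rewrite /specht rmorph_prod (bigD1 (t i).2) //=.
rewrite rmorph_prod (bigD1 i) //=.
rewrite rmorph_prod (bigD1 j) /=; last by rewrite -hc eqxx lt.
rewrite raddfB /= !mevalXU hv subrr !mul0r. done.
Qed.

Lemma specht_nz (F : fieldType) (charF0 : [pchar F] =i pred0) n (t : tabT n) :
  spec_at t (specht F t) != 0.
Proof.
rewrite /spec_at /specht rmorph_prod; apply/prodf_neq0 => c _.
rewrite rmorph_prod; apply/prodf_neq0 => i _.
rewrite rmorph_prod; apply/prodf_neq0 => j /andP[_ lt].
rewrite raddfB /= !mevalXU -oppr_eq0 opprB -(natrB _ (ltnW lt)).
rewrite ((iffLR (pcharf0P F) charF0) (trow t j - trow t i)%N) subn_eq0 -ltnNge.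
by rewrite lt.
Qed.

Lemma aleph_std n la : is_partition n la -> std_tab la (aleph la n).
Proof.
move=> hp; set a := aleph la n.
have rE := fun i => aleph_rowE i hp; have cE := fun i => aleph_colE i hp.
have pA := fun i : 'I_n => pos_aleph hp (ltn_ord i).
apply/and5P; split.
- apply/injectiveP => i j e; apply: val_inj.
  have e1 : trow a i = trow a j by rewrite /trow e.
  have e2 : tcol a i = tcol a j by rewrite /tcol e.
  by rewrite /= -(pA i) -(pA j) -!rE -!cE e1 e2.
- apply/forallP => i; rewrite /in_diagram /= rE cE; exact: aleph_diag hp (ltn_ord i).
- apply/forallP => r; apply/forallP => c'; apply/implyP => hd.
  have [_ hn _] := diag_lt hp hd; apply/existsP; exists (Ordinal hn).
  have [e1 e2] := aleph_pos hp hd.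
  apply/eqP; rewrite [a _]surjective_pairing; congr pair; apply: val_inj.
  + by have := rE (Ordinal hn); rewrite /trow /= e1.
  + by have := cE (Ordinal hn); rewrite /tcol /= e2.
- apply/forallP => i; apply/forallP => j; apply/implyP => /andP[/eqP h1 h2].
  rewrite -(pA i) -(pA j) -!rE -!cE h1 ltn_add2l; exact: h2.
- apply/forallP => i; apply/forallP => j; apply/implyP => /andP[/eqP h1 h2].
  rewrite -(pA i) -(pA j) -!rE -!cE h1; apply: lex_lt => //.
  rewrite -h1 rE cE; exact: aleph_diag hp (ltn_ord i).
Qed.

Lemma other_zero (F : fieldType) n la (t : tabT n) : is_partition n la ->
  std_tab la t -> t != aleph la n -> spec_at (aleph la n) (specht F t) = 0.
Proof.
move=> hp st ne.
have tinj : injective t by case/and5P: st => /injectiveP.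
case: (boolP [exists i, exists j, [&& (i != j), (tcol t i == tcol t j) &
                (aleph_row la i == aleph_row la j)]]).
- case/existsP => i /existsP [j /and3P[nij /eqP hc /eqP hr]].
  apply: (specht_zero (i:=i) (j:=j)) => //.
  by rewrite !aleph_rowE // hr.
- move/existsPn => H; exfalso; move/negP: ne; apply.
  have H' : forall i j : 'I_n, i != j -> tcol t i = tcol t j ->
      aleph_row la i != aleph_row la j.
    move=> i j nij hc; move/existsPn: (H i) => /(_ j).
    by rewrite nij hc eqxx /=.
  have T := tab_eq hp st H'.
  apply/eqP/ffunP => i; rewrite [t i]surjective_pairing [aleph la n i]surjective_pairing.
  have [e1 e2] := T i.
  congr pair; apply: val_inj.
  + exact: (etrans e1 (esym (aleph_rowE i hp))).
  + exact: (etrans e2 (esym (aleph_colE i hp))).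
Qed.

Unset Implicit Arguments.

Theorem mainTheorem1 (F : fieldType) (charF0 : [pchar F] =i pred0)
  (n : nat) (la : seq nat) (Hla : is_partition n la)
  (c : tabT n -> F) (f : {mpoly F[n]})
  (Hf : f = \sum_(t : tabT n | std_tab la t) c t *: specht F t) :
  spec_at (aleph la n) (specht F (aleph la n)) != 0 /\
  c (aleph la n) = spec_at (aleph la n) f / spec_at (aleph la n) (specht F (aleph la n)).
Proof.
have nz := specht_nz charF0 (aleph la n).
split => //.
have -> : spec_at (aleph la n) f =
    c (aleph la n) * spec_at (aleph la n) (specht F (aleph la n)).
  rewrite Hf /spec_at raddf_sum (bigD1 (aleph la n)) /=; last exact: aleph_std.
  rewrite mevalZ big1 ?addr0 // => t /andP[st ne].
  by rewrite mevalZ; have := other_zero F Hla st ne; rewrite /spec_at => ->; rewrite mulr0.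
by rewrite mulfK.
Qed.
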